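(* Let $p\ge5$ be prime. Then $D^pP$ is a modular form mod $p$; that is, the image of $D^pP\in\mathbb{Z}_{(p)}[P,Q,R]$ in $(\mathbb{Z}/p\mathbb{Z})[P,Q,R]$ lies in $(\mathbb{Z}/p\mathbb{Z})[Q,R]$.
   Context: $\mathbb{Z}_{(p)}$ is the localization of $\mathbb{Z}$ at $p$. $P=E_2,Q=E_4,R=E_6$ are the normalized Eisenstein series, viewed as independent variables. $D=q\frac{d}{dq}$ acts on $\mathbb{Z}_{(p)}[P,Q,R]$ as the derivation with $DP=\frac{P^2-Q}{12}$, $DQ=\frac{PQ-R}{3}$, $DR=\frac{PR-Q^2}{2}$. *)

(* Defs.v *)
From mathcomp Require Import all_boot all_algebra.
From mathcomp Require Import mpoly.
Set Implicit Arguments. Unset Strict Implicit. Unset Printing Implicit Defensive.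
Import GRing.Theory Num.Theory.
Local Open Scope ring_scope.

(* Polynomials in P = 'X_0, Q = 'X_1, R = 'X_2 with rational coefficients;
   Z_(p)[P,Q,R] is the subring of those with p-integral coefficients. *)
Notation QPQR := {mpoly rat[3]}.

Definition vP : QPQR := 'X_(@Ordinal 3 0 isT).
Definition vQ : QPQR := 'X_(@Ordinal 3 1 isT).
Definition vR : QPQR := 'X_(@Ordinal 3 2 isT).

(* The Ramanujan derivation D = q d/dq :
   DP = (P^2 - Q)/12, DQ = (PQ - R)/3, DR = (PR - Q^2)/2. *)
Definition Dop (F : QPQR) : QPQR :=
  F^`M(@Ordinal 3 0 isT) * ((12%:R)^-1 *: (vP ^+ 2 - vQ))
  + F^`M(@Ordinal 3 1 isT) * ((3%:R)^-1 *: (vP * vQ - vR))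
  + F^`M(@Ordinal 3 2 isT) * ((2%:R)^-1 *: (vP * vR - vQ ^+ 2)).

Definition p_integral (p : nat) (x : rat) : bool := ~~ (p%:Z %| denq x)%Z.

(* reduction Z_(p) -> Z/pZ (meaningful on p-integral rationals) *)
Definition redp (p : nat) (x : rat) : 'F_p :=
  (numq x)%:~R / (denq x)%:~R.

Definition in_Zp_poly (p : nat) (F : QPQR) : Prop :=
  forall m : 'X_{1..3}, p_integral p F@_m.

Definition image_in_FpQR (p : nat) (F : QPQR) : Prop :=
  forall m : 'X_{1..3}, (0 < m (@Ordinal 3 0 isT))%N ->
    (map_mpoly (redp p) F)@_m = 0.

(* Main.v *)
Require Import Defs.
From mathcomp Require Import all_boot all_algebra.
From mathcomp Require Import mpoly.
From mathcomp Require Import ring zify.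
Set Implicit Arguments. Unset Strict Implicit. Unset Printing Implicit Defensive.
Import GRing.Theory Num.Theory.
Local Open Scope ring_scope.

Local Notation i0 := (@Ordinal 3 0 isT).
Local Notation i1 := (@Ordinal 3 1 isT).
Local Notation i2 := (@Ordinal 3 2 isT).
Section Gen.
Variable S : comNzRingType.
Local Notation MP := {mpoly S[3]}.
Local Notation XX0 := ('X_i0 : MP).
Local Notation X1 := ('X_i1 : MP).
Local Notation X2 := ('X_i2 : MP).

Definition Dt0 (F : MP) : MP :=
  F^`M(i0) * (XX0 ^+ 2 - X1) + F^`M(i1) * ((XX0 * X1 - X2) *+ 4)
  + F^`M(i2) * ((XX0 * X2 - X1 ^+ 2) *+ 6).
Definition Dt := locked Dt0.
Lemma DtE F : Dt F = Dt0 F. Proof. by rewrite /Dt -lock. Qed.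
Definition Wt (F : MP) : MP :=
  F^`M(i0) * (XX0 *+ 2) + F^`M(i1) * (X1 *+ 4) + F^`M(i2) * (X2 *+ 6).

Lemma dX (i j : 'I_3) : ('X_i : MP)^`M(j) = (i == j)%:R.
Proof.
rewrite mderivX mnm1E; case: eqP => [->|_]; last by rewrite scale0r.
have -> : (U_(j) - U_(j) = 0)%MM by apply/mnmP=> k; rewrite !mnmE subnn.
by rewrite mpolyX0 scale1r.
Qed.

Lemma L1 F : (Dt F)^`M(i0) = Dt (F^`M(i0)) + Wt F.
Proof.
rewrite !DtE /Dt0 /Wt !expr2 !(mderivD, mderivM, mderivB, mderivMn, mderivN).
rewrite !(mderiv_comm _ i0) !dX /=.
ring.
Qed.
Lemma L2 F : Wt (Dt F) = Dt (Wt F) + (Dt F) *+ 2.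
Proof.
rewrite !DtE /Dt0 /Wt !expr2 !(mderivD, mderivM, mderivB, mderivMn, mderivN).
rewrite !dX /=.
rewrite (mderiv_comm i0 i1 F) (mderiv_comm i0 i2 F) (mderiv_comm i1 i2 F).
ring.
Qed.
Lemma DtD F G : Dt (F + G) = Dt F + Dt G.
Proof. rewrite !DtE /Dt0 !mderivD; ring. Qed.
Lemma Dt_0 : Dt 0 = 0.
Proof. rewrite !DtE /Dt0 !mderiv0; ring. Qed.
Lemma DtMn F k : Dt (F *+ k) = Dt F *+ k.
Proof. elim: k => [|k IH]; first by rewrite !mulr0n Dt_0. by rewrite !mulrS DtD IH. Qed.
Lemma iterD n F G : iter n Dt (F + G) = iter n Dt F + iter n Dt G.
Proof. elim: n => [//|n IH]; by rewrite !iterS IH DtD. Qed.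
Lemma iterMn n F k : iter n Dt (F *+ k) = iter n Dt F *+ k.
Proof. elim: n => [//|n IH]; by rewrite !iterS IH DtMn. Qed.
Lemma L5 n F : Wt (iter n Dt F) = iter n Dt (Wt F) + (iter n Dt F) *+ (2*n).
Proof.
elim: n => [|n IH]; first by rewrite /= mulr0n addr0.
rewrite !iterS L2 IH DtD DtMn -addrA; congr (_ + _).
by rewrite -mulrnDr mulnS addnC.
Qed.
Lemma L4 n F : (iter n.+1 Dt F)^`M(i0) =
  iter n.+1 Dt (F^`M(i0)) + iter n Dt (Wt F) *+ n.+1 + iter n Dt F *+ (n * n.+1).
Proof.
elim: n => [|n IH]; first by rewrite /= L1 mulr0n addr0.
rewrite iterS L1 IH !DtD !DtMn L5 -!iterS.
move: (iter _ Dt _) (iter _ Dt _) (iter _ Dt _) => a b c.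
rewrite (mulrSr b n.+1) (_ : (n.+1 * n.+2 = n * n.+1 + 2 * n.+1)%N); last first.
  by rewrite (mulnC n.+1) -mulnDl addn2.
rewrite mulrnDr.
move: (b *+ n.+1) (a *+ (n * n.+1)) (a *+ (2 * n.+1)) => u v w.
ring.
Qed.
Lemma coefMX0 (i : 'I_3) (H : MP) (m : 'X_{1..3}) : m i = 0%N -> (H * 'X_i)@_m = 0.
Proof.
move=> mi; elim/mpolyind: H => [|c k H _ _ IH]; first by rewrite mul0r mcoeff0.
rewrite mulrDl mcoeffD IH addr0 -scalerAl mcoeffZ -mpolyXD mcoeffX.
case: eqP => [e|_]; last by rewrite mulr0.
by move: mi; rewrite -e mnmDE mnm1E eqxx addn1.
Qed.
Lemma coefDX (i : 'I_3) (G : MP) (m : 'X_{1..3}) : (G^`M(i) * 'X_i)@_m = G@_m *+ m i.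
Proof.
case: (posnP (m i)) => [mi|mi]; first by rewrite coefMX0 // mi mulr0n.
have em : m = (U_(i) + (m - U_(i)))%MM.
  by rewrite addmC submK //; apply/mnm_lepP => j; rewrite mnm1E; case: eqP => [<-|]. 
rewrite {1}em mcoeffMX mcoeff_deriv addmC -em mnmBE mnm1E eqxx subn1 prednK //.
Qed.
Definition wt (m : 'X_{1..3}) : nat := (2 * m i0 + 4 * m i1 + 6 * m i2)%N.
Lemma coefW (G : MP) (m : 'X_{1..3}) : (Wt G)@_m = G@_m *+ wt m.
Proof.
rewrite /Wt !mulrnAr !mcoeffD !coefDX /wt.
rewrite !mulrnDr !mulr0n.
move: (G@_m *+ m i0) (G@_m *+ m i1) (G@_m *+ m i2) => a b c.
ring.
Qed.
Lemma Dt_1 : Dt 1 = 0.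
Proof. by rewrite DtE /Dt0 -mpolyC1 !mderivC !mul0r !addr0. Qed.
Lemma iter1 n : iter n.+1 Dt 1 = 0.
Proof. elim: n => [|n IH]; first exact: Dt_1. by rewrite iterS IH Dt_0. Qed.
Lemma WX0 : Wt XX0 = XX0 *+ 2.
Proof. rewrite /Wt !dX /=; ring. Qed.
Lemma homogW n : Wt (iter n Dt XX0) = iter n Dt XX0 *+ (2 * n + 2).
Proof. by rewrite L5 WX0 iterMn -mulrnDr addnC. Qed.
Lemma key n : (iter n.+1 Dt XX0)^`M(i0) =
   (iter n Dt XX0 *+ 2 + iter n Dt XX0 *+ n) *+ n.+1.
Proof.
by rewrite L4 dX eqxx iter1 add0r WX0 iterMn [RHS]mulrnDl -!mulrnA.
Qed.
End Gen.
Arguments Dt {S}.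

Lemma map_deriv (f : {rmorphism int -> rat}) (i : 'I_3) (F : {mpoly int[3]}) :
  map_mpoly f (F^`M(i)) = (map_mpoly f F)^`M(i).
Proof.
apply/mpolyP => m; rewrite mcoeff_map_mpoly !mcoeff_deriv mcoeff_map_mpoly.
by rewrite raddfMn.
Qed.

Lemma map_Dt (F : {mpoly int[3]}) :
  map_mpoly (intr : int -> rat) (Dt F) = Dt (map_mpoly intr F).
Proof.
have h0 : map_mpoly (intr : int -> rat) ('X_i0 ^+ 2 - 'X_i1) = 'X_i0 ^+ 2 - 'X_i1.
  by rewrite rmorphB rmorphXn /= !map_mpolyX.
have h1 : map_mpoly (intr : int -> rat) (('X_i0 * 'X_i1 - 'X_i2) *+ 4)
   = ('X_i0 * 'X_i1 - 'X_i2) *+ 4.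
  by rewrite rmorphMn rmorphB rmorphM /= !map_mpolyX.
have h2 : map_mpoly (intr : int -> rat) (('X_i0 * 'X_i2 - 'X_i1 ^+ 2) *+ 6)
   = ('X_i0 * 'X_i2 - 'X_i1 ^+ 2) *+ 6.
  by rewrite rmorphMn rmorphB rmorphM rmorphXn /= !map_mpolyX.
rewrite !DtE /Dt0 rmorphD rmorphD !rmorphM /= h0 h1 h2.
by rewrite !map_deriv.
Qed.

Lemma Dop_Dt (H : QPQR) : Dop H = 12%:R^-1 *: Dt H.
Proof.
rewrite DtE /Dop /Dt0.
have e3 : (3%:R^-1 : rat) = 12%:R^-1 *+ 4 by [].
have e2 : (2%:R^-1 : rat) = 12%:R^-1 *+ 6 by [].
rewrite e3 e2 -!mul_mpolyC !rmorphMn /=.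
rewrite /vP /vQ /vR.
move: (12%:R^-1 : rat)%:MP => c.
ring.
Qed.

Lemma DtZ (S : comNzRingType) (c : S) (H : {mpoly S[3]}) : Dt (c *: H) = c *: Dt H.
Proof. by rewrite !DtE /Dt0 !mderivZ -!scalerAl !scalerDr. Qed.

Lemma iterDop n : iter n Dop vP =
  (12%:R^-1 : rat)^+n *: map_mpoly (intr : int -> rat) (iter n Dt ('X_i0 : {mpoly int[3]})).
Proof.
elim: n => [|n IH]; first by rewrite /= expr0 scale1r map_mpolyX.
by rewrite iterS IH Dop_Dt DtZ scalerA -exprS iterS map_Dt.
Qed.

Lemma coefDop n m : (iter n Dop vP)@_m =
  (12%:R^-1 : rat)^+n * ((iter n Dt ('X_i0 : {mpoly int[3]}))@_m)%:~R.
Proof. by rewrite iterDop mcoeffZ mcoeff_map_mpoly. Qed.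



Lemma rel n (z : int) :
  let x := (12%:R^-1 : rat)^+n * z%:~R in
  (`|numq x| * 12 ^ n = `|z| * `|denq x|)%N.
Proof.
move=> x.
have hx : x * (12 ^ n)%:R = z%:~R.
  rewrite /x natrX mulrAC -exprMn mulVf ?expr1n ?mul1r //.
have e : numq x * (12 ^ n)%:Z = z * denq x.
  apply: (@intr_inj rat).
  rewrite !rmorphM /= numqE mulrAC.
  have -> : ((12 ^ n)%N%:~R : rat) = (12^n)%:R by [].
  by rewrite hx.
have := congr1 (fun w : int => `|w|%N) e.
by rewrite /= !abszM.
Qed.

Lemma not12 p n : prime p -> (5 <= p)%N -> ~~ (p %| 12 ^ n)%N.
Proof.
move=> pp p5; rewrite Euclid_dvdX //; apply/negP => /andP [h _].
move: h; rewrite (_ : 12 = 2 * 2 * 3)%N // !Euclid_dvdM // => /orP [/orP [] | ] h;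
  have := dvdn_leq _ h => /(_ isT); lia.
Qed.

Lemma Fp_int0 p (w : int) : prime p -> (p %| `|w|)%N -> (w%:~R : 'F_p) = 0.
Proof.
move=> pp h; have : (p%:Z %| w)%Z by rewrite dvdzE.
case/dvdzP => k ->; rewrite intrM /=.
have -> : ((p%:Z)%:~R : 'F_p) = p%:R by [].
by rewrite pchar_Fp_0 // mulr0.
Qed.

Lemma ratlem p n (z : int) : prime p -> (5 <= p)%N ->
  let x := (12%:R^-1 : rat)^+n * z%:~R in
  p_integral p x /\ ((p %| `|z|)%N -> redp p x = 0).
Proof.
move=> pp p5 x.
have r := rel n z; rewrite -/x in r.
have cp := coprime_num_den x.
have nD := not12 n pp p5.
have pa : (p %| `|z|)%N -> (p %| `|numq x|)%N.
  move=> h; have : (p %| `|numq x| * 12 ^ n)%N by rewrite r dvdn_mulr.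
  by rewrite Euclid_dvdM // (negbTE nD) orbF.
split.
  rewrite /p_integral dvdzE /=; apply/negP => hb.
  have : (p %| `|numq x| * 12 ^ n)%N by rewrite r dvdn_mull.
  rewrite Euclid_dvdM // (negbTE nD) orbF => ha.
  have : (p %| gcdn `|numq x| `|denq x|)%N by rewrite dvdn_gcd ha hb.
  rewrite (eqP cp) dvdn1 => /eqP p1; by rewrite p1 in pp.
move=> /pa h; rewrite /redp Fp_int0 // mul0r //.
Qed.


Lemma mainZ p (m : 'X_{1..3}) : prime p -> (5 <= p)%N -> (0 < m i0)%N ->
  (p %| `|(iter p Dt ('X_i0 : {mpoly int[3]}))@_m|)%N.
Proof.
move=> pp p5 m0.
set G := iter p Dt _.
have [n pn] : exists n, p = n.+1 by exists p.-1; rewrite prednK // prime_gt0.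
have hk := key int n; rewrite -pn -/G in hk.
set m' := (m - U_(i0))%MM.
have em : m = (m' + U_(i0))%MM.
  by rewrite submK //; apply/mnm_lepP => j; rewrite mnm1E; case: eqP => [<-|].
have e1 := congr1 (mcoeff m') hk.
rewrite mcoeff_deriv mcoeffMn -em (_ : (m' i0).+1 = m i0) in e1; last first.
  by rewrite mnmBE mnm1E eqxx subn1 prednK.
have e2 : (`|G@_m| * m i0 = `|(iter n Dt 'X_i0 *+ 2 + iter n Dt 'X_i0 *+ n)@_m'| * p)%N.
  have := congr1 (fun w : int => `|w|%N) e1.
  by rewrite -(mulr_natr (G@_m)) -(mulr_natr (_@_m')) /= !abszM !natz.
have : (p %| `|G@_m| * m i0)%N by rewrite e2 dvdn_mull.
rewrite Euclid_dvdM // => /orP [//|hm].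
case: (G@_m =P 0) => [->//|nz].
exfalso.
have hw := congr1 (mcoeff m) (homogW int p); rewrite -/G coefW mcoeffMn in hw.
have ew : wt m = (2 * p + 2)%N.
  apply/eqP; rewrite -(eqr_nat int) -(inj_eq (mulfI (x:=G@_m) _)); last by apply/eqP.
  by rewrite !mulr_natr hw.
move: ew; rewrite /wt; case/dvdnP: hm => k hk'.
move: m0; rewrite hk'.
move: (m _) (m _) => a b.
clear hk'; case: k => [|[|k]]; rewrite ?mul0n ?mul1n ?mulSn; try lia.
Qed.

Lemma mapcoef p (f : rat -> 'F_p) (F : QPQR) k : f 0 = 0 ->
  (map_mpoly f F)@_k = f F@_k.
Proof.
move=> f0; rewrite /map_mpoly /mmap raddf_sum /=.
under eq_bigr => m _ do rewrite mmap1_id mcoeffCM mcoeffX.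
case: (boolP (k \in msupp F)) => hk.
  rewrite (bigD1_seq k) //= ?msupp_uniq // eqxx mulr1 big1 ?addr0 //.
  by move=> m /negbTE ->; rewrite mulr0.
rewrite big1_seq; last by move=> m /andP [_ hm]; case: eqP hm hk => [-> ->|]; rewrite ?mulr0.
by move: hk; rewrite mcoeff_msupp negbK => /eqP ->.
Qed.

Theorem proposition3p7 (p : nat) (hp : prime p) (hp5 : (5 <= p)%N) :
  in_Zp_poly p (iter p Dop vP) /\ image_in_FpQR p (iter p Dop vP).
Proof.
split.
  by move=> m; rewrite coefDop; exact: (ratlem _ _ hp hp5).1.
move=> m m0; rewrite mapcoef; last by rewrite /redp (_ : numq 0 = 0) // mul0r.
rewrite coefDop; apply: (ratlem _ _ hp hp5).2.
exact: mainZ.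
Qed.
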